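(* Let $\{c_n\}_{n\ge1}$ be a real sequence and $\{d_{n+1}\}_{n\ge1}$ a positive chain sequence, and let the polynomials $P_n$ be defined by $P_0(x)=1$, $P_1(x)=x-c_1$ and \[ P_{n+1}(x)=(x-c_{n+1})P_n(x)-d_{n+1}(x^2+1)P_{n-1}(x),\qquad n\ge1 . \] Put $u_0(x)=1$ and \[ u_n(x)=\frac{(-1)^n}{(x-i)^n\prod_{j=1}^n\sqrt{d_{j+1}}}\,P_n(x),\qquad n\ge1, \] and $\mathbf u_n(x)=[u_0(x),u_1(x),\dots,u_{n-1}(x)]^T$. For $n\ge2$ let $\mathbf A_n$ be the $n\times n$ tridiagonal matrix with diagonal entries $c_1,\dots,c_n$, entries $(\mathbf A_n)_{k,k+1}=i\sqrt{d_{k+1}}$ and $(\mathbf A_n)_{k+1,k}=-i\sqrt{d_{k+1}}$ for $k=1,\dots,n-1$, and let $\mathbf B_n$ be the $n\times n$ tridiagonal matrix with all diagonal entries $1$ and $(\mathbf B_n)_{k,k+1}=(\mathbf B_n)_{k+1,k}=\sqrt{d_{k+1}}$ for $k=1,\dots,n-1$. Let $\mathbf e_n$ be the $n$-th column of the $n\times n$ identity matrix. Then for every $n\ge2$, \[ \mathbf A_n\mathbf u_n(x)=x\,\mathbf B_n\mathbf u_n(x)+\sqrt{d_{n+1}}\,(x-i)\,u_n(x)\,\mathbf e_n . \] Moreover, for $n\ge2$ the zeros of $P_n$ are the eigenvalues of the generalized eigenvalue problem $\mathbf A_n\mathbf u_n(x)=x\,\mathbf B_n\mathbf u_n(x)$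.
   Context: A sequence $\{d_{n+1}\}_{n\ge1}$ is a positive chain sequence if there is a sequence $\{g_{n+1}\}_{n\ge0}$ (a parameter sequence) with $0\le g_1<1$, $0<g_n<1$ for $n\ge2$, and $d_{n+1}=(1-g_n)g_{n+1}$ for $n\ge1$. *)

(* Defs.v *)
From HB Require Import structures.
From mathcomp Require Import all_boot all_order all_algebra.
From mathcomp Require Import complex.
Set Implicit Arguments. Unset Strict Implicit. Unset Printing Implicit Defensive.
Import Order.TTheory GRing.Theory Num.Theory.
Local Open Scope ring_scope.

Section Defs.
Variable R : rcfType.
Local Notation C := R[i].

Definition iC : C := Complex 0 1.
Definition toC (r : R) : C := Complex r 0.

(* {d_{n+1}}_{n>=1} is a positive chain sequence (d indexed so that d (n+1) = d_{n+1};
   d 0, d 1 unused).  The parameter sequence g is indexed g k = g_k, k >= 1. *)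
Definition positive_chain_sequence (d : nat -> R) : Prop :=
  exists g : nat -> R,
    [/\ 0 <= g 1%N < 1,
        (forall n, (2 <= n)%N -> 0 < g n < 1) &
        (forall n, (1 <= n)%N -> d n.+1 = (1 - g n) * g n.+1)].

Variables (c d : nat -> R).

(* Ppair n = (P_n, P_{n+1}) *)
Fixpoint Ppair (n : nat) : {poly C} * {poly C} :=
  match n with
  | 0%N => (1, 'X - (toC (c 1%N))%:P)
  | m.+1 => let: (p, q) := Ppair m in
            (q, ('X - (toC (c m.+2))%:P) * q
                  - (toC (d m.+2))%:P * ('X ^+ 2 + 1) * p)
  end.

Definition P (n : nat) : {poly C} := (Ppair n).1.

Definition sqd (k : nat) : C := toC (Num.sqrt (d k)).

Definition u (n : nat) (x : C) : C :=
  (-1) ^+ n / ((x - iC) ^+ n * \prod_(1 <= j < n.+1) sqd j.+1) * (P n).[x].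

Definition uvec (n : nat) (x : C) : 'cV[C]_n := \col_(k < n) u k x.

(* A_n (0-based indices: entry (k, k+1) = i sqrt(d_{k+2}), i.e. 1-based (k,k+1) = i sqrt(d_{k+1})) *)
Definition Amx (n : nat) : 'M[C]_n :=
  \matrix_(k < n, l < n)
    if k == l then toC (c k.+1)
    else if l == k.+1 :> nat then iC * sqd k.+2
    else if k == l.+1 :> nat then - iC * sqd l.+2
    else 0.

Definition Bmx (n : nat) : 'M[C]_n :=
  \matrix_(k < n, l < n)
    if k == l then 1
    else if l == k.+1 :> nat then sqd k.+2
    else if k == l.+1 :> nat then sqd l.+2
    else 0.

Definition evec (n : nat) : 'cV[C]_n := \col_(k < n) if k == n.-1 :> nat then 1 else 0.

End Defs.

(* Main.v *)
Require Import Defs.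
From HB Require Import structures.
From mathcomp Require Import all_boot all_order all_algebra.
From mathcomp Require Import complex.
From mathcomp Require Import ring.
Import Order.TTheory GRing.Theory Num.Theory.
Local Open Scope ring_scope.

Section Tri.
Variable C : fieldType.

Lemma sum_if1 (n j : nat) (F : nat -> C) :
  \sum_(0 <= l < n) (if l == j then F l else 0) = if (j < n)%N then F j else 0.
Proof. by rewrite -big_mkcond big_nat1_eq. Qed.

Lemma mul_tri n (M : 'M[C]_n) (al be ga w : nat -> C) (k : 'I_n) :
  (forall (k l : 'I_n), M k l = if k == l then al k else if l == k.+1 :> nat then be k
      else if k == l.+1 :> nat then ga l else 0) ->
  (M *m \col_(l < n) w l) k 0 =
  al k * w k + (if (k.+1 < n)%N then be k * w k.+1 else 0)
  + (if (k : nat) is k'.+1 then ga k' * w k' else 0).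
Proof.
move=> HM; rewrite mxE.
transitivity (\sum_(0 <= l < n) ((if l == k then al k * w l else 0)
   + (if l == k.+1 then be k * w l else 0)
   + (if l.+1 == k then ga l * w l else 0))).
  rewrite big_mkord; apply: eq_bigr => l _; rewrite HM mxE.
  rewrite -val_eqE /=; move: (nat_of_ord k) (nat_of_ord l) => a b.
  have [->|ne] := eqVneq b a.
    by rewrite (ltn_eqF (ltnSn a)) (gtn_eqF (ltnSn a)) !addr0.
  rewrite add0r.
  have [->|ne2] := eqVneq b a.+1.
    by rewrite (gtn_eqF (ltnW (ltnSn a.+1))) addr0.
  by rewrite add0r [a == b.+1]eq_sym; case: (b.+1 == a); rewrite ?mul0r.
rewrite !big_split /= !sum_if1 (ltn_ord k).
congr (_ + _); case: k => [[|k] hk] /=.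
  by rewrite big1.
under eq_bigr do rewrite eqSS.
by rewrite sum_if1 (ltnW hk).
Qed.
End Tri.

Section Main.
Variables (R : rcfType) (c d : nat -> R).
Local Notation C := R[i].

Lemma toCE (r : R) : toC r = (r%:C)%C. Proof. by []. Qed.

Lemma iC2 : iC R * iC R = -1.
Proof. by rewrite -expr2; exact: sqr_i. Qed.

Lemma iC_subC (r : R) : iC R - toC r != 0.
Proof.
apply/eqP => /(congr1 (@complex.Im R)) /=; rewrite oppr0 addr0 => /eqP.
by rewrite oner_eq0.
Qed.

Lemma dpos : positive_chain_sequence d -> forall k, (2 <= k)%N -> 0 < d k.
Proof.
case=> g [/andP [g10 g11] g2 gd] [|[|k]] // _.
rewrite gd // mulr_gt0 //; last by case/andP: (g2 k.+2 isT).
case: k => [|k]; first by rewrite subr_gt0.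
by case/andP: (g2 k.+2 isT) => _; rewrite subr_gt0.
Qed.

Hypothesis hd : positive_chain_sequence d.

Lemma sqd_neq0 k : (2 <= k)%N -> sqd d k != 0.
Proof.
move=> hk; rewrite /sqd toCE; apply/eqP => /(congr1 (@complex.Re R)) /= /eqP.
by rewrite gt_eqF // sqrtr_gt0 dpos.
Qed.

Lemma sqd2 k : (2 <= k)%N -> sqd d k * sqd d k = toC (d k).
Proof.
move=> hk; rewrite /sqd !toCE -rmorphM; congr (_%:C)%C.
by rewrite -expr2 sqr_sqrtr // ltW // dpos.
Qed.

Lemma P0 : P c d 0 = 1. Proof. by []. Qed.
Lemma P1 : P c d 1 = 'X - (toC (c 1%N))%:P. Proof. by []. Qed.
Lemma PS k : P c d k.+2 = ('X - (toC (c k.+2))%:P) * P c d k.+1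
     - (toC (d k.+2))%:P * ('X ^+ 2 + 1) * P c d k.
Proof.
rewrite /P /=.
by case: (Ppair c d k).
Qed.

Lemma PSx k (x : C) : (P c d k.+2).[x] = (x - toC (c k.+2)) * (P c d k.+1).[x]
     - toC (d k.+2) * (x ^+ 2 + 1) * (P c d k).[x].
Proof. by rewrite PS !hornerE. Qed.

Lemma Pi_neq0 k : (P c d k).[iC R] != 0.
Proof.
suff: (P c d k).[iC R] != 0 /\ (P c d k.+1).[iC R] != 0 by case.
elim: k => [|k [_ IH]].
  by rewrite P0 P1 !hornerE oner_eq0 iC_subC.
split=> //; rewrite PSx (_ : iC R ^+ 2 = -1) ?addNr ?mulr0 ?mul0r ?subr0; last exact: sqr_i.
by rewrite mulf_neq0 // iC_subC.
Qed.


Definition E (x : C) (w : nat -> C) k :=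
  (toC (c k.+1) - x) * w k + (iC R - x) * sqd d k.+2 * w k.+1
  - (if k is k'.+1 then (iC R + x) * sqd d k'.+2 * w k' else 0).

Lemma rowE n (x : C) (w : nat -> C) (k : 'I_n) :
  (Amx c d n *m \col_(l < n) w l) k 0 =
  x * (Bmx d n *m \col_(l < n) w l) k 0 + E x w k
  - (if (k.+1 < n)%N then 0 else (iC R - x) * sqd d k.+2 * w k.+1).
Proof.
rewrite (@mul_tri _ _ _ (fun k => toC (c k.+1)) (fun k => iC R * sqd d k.+2)
   (fun l => - iC R * sqd d l.+2)); last by move=> ? ?; rewrite mxE.
rewrite (@mul_tri _ _ _ (fun _ => 1) (fun k => sqd d k.+2)
   (fun l => sqd d l.+2)); last by move=> ? ?; rewrite mxE.
rewrite /E; case: (k.+1 < n)%N; case: (nat_of_ord k) => [|k'] /=; ring.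
Qed.

Definition a (x : C) k :=
  (-1) ^+ k / ((x - iC R) ^+ k * \prod_(1 <= j < k.+1) sqd d j.+1).

Lemma uE x k : u c d k x = a x k * (P c d k).[x]. Proof. by []. Qed.

Lemma prod_neq0 k : \prod_(1 <= j < k.+1) sqd d j.+1 != 0.
Proof.
elim: k => [|k IH]; first by rewrite big_geq // oner_eq0.
by rewrite big_nat_recr //= mulf_neq0 // sqd_neq0.
Qed.

Lemma a0 x : a x 0 = 1.
Proof. by rewrite /a big_geq // !expr0 !mul1r invr1. Qed.

Lemma a_neq0 x k : x != iC R -> a x k != 0.
Proof.
move=> hx; rewrite /a mulf_neq0 ?invr_eq0 ?mulf_neq0 ?expf_neq0 ?prod_neq0 //.
  by rewrite oppr_eq0 oner_eq0.
by rewrite subr_eq0.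
Qed.

Lemma a_step x k : x != iC R -> a x k.+1 * ((iC R - x) * sqd d k.+2) = a x k.
Proof.
move=> hx; rewrite /a big_nat_recr //= !exprS.
have h1 : x - iC R != 0 by rewrite subr_eq0.
have h2 := prod_neq0 k.
have h3 : sqd d k.+2 != 0 by rewrite sqd_neq0.
by field; rewrite h2 h3 h1 expf_neq0.
Qed.

Lemma Eu x k : x != iC R -> E x (fun k => u c d k x) k = 0.
Proof.
move=> hx; rewrite /E !uE /=.
case: k => [|k].
  have h := a_step x 0 hx; rewrite a0 in h.
  rewrite a0 P0 P1 -polyC1 hornerC hornerXsubC.
  transitivity ((toC (c 1%N) - x) + (a x 1 * ((iC R - x) * sqd d 2)) * (x - toC (c 1%N))).
    by ring.
  by rewrite h; ring.
rewrite PSx uE -(a_step x k hx) -(a_step x k.+1 hx).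
transitivity (a x k.+2 * ((iC R - x) * sqd d k.+3) * (- toC (d k.+2) * (x^+2+1) * (P c d k).[x]
  - (iC R + x) * (iC R - x) * (sqd d k.+2 * sqd d k.+2) * (P c d k).[x])).
  by ring.
rewrite sqd2 // (_ : (iC R + x) * (iC R - x) = -(x^+2+1)); first by ring.
transitivity (iC R * iC R - x ^+ 2); first by ring.
by rewrite iC2; ring.
Qed.

Lemma u0 x : u c d 0 x = 1.
Proof. by rewrite uE a0 P0 -polyC1 hornerC mulr1. Qed.

Lemma subC_iC r : toC r - iC R != 0.
Proof. by rewrite -oppr_eq0 opprB iC_subC. Qed.

Lemma Estep x (W U : nat -> C) (w0 : C) k : x != iC R ->
  E x W k = 0 -> E x U k = 0 -> W k = w0 * U k ->
  (if k is k'.+1 then W k' = w0 * U k' else True) -> W k.+1 = w0 * U k.+1.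
Proof.
move=> hx e1 e2 hq hp.
have : (iC R - x) * sqd d k.+2 * (W k.+1 - w0 * U k.+1) = 0.
  transitivity (E x W k - w0 * E x U k); last by rewrite e1 e2 mulr0 subr0.
  rewrite /E; case: k hq hp {e1 e2} => [|k] hq hp /=; rewrite ?hp hq; ring.
move/eqP; rewrite !mulf_eq0 (negbTE (@sqd_neq0 k.+2 isT)) orbF subr_eq0 eq_sym (negbTE hx) /=.
by rewrite subr_eq0 => /eqP.
Qed.

End Main.

Theorem theorem1p1 (R : rcfType) (c d : nat -> R) :
  positive_chain_sequence d ->
  forall n : nat, (2 <= n)%N ->
    (forall x : R[i], x != iC R ->
       Amx c d n *m uvec c d n x
       = x *: (Bmx d n *m uvec c d n x)
         + (sqd d n.+1 * (x - iC R) * u c d n x) *: evec R n)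
    /\
    (forall x : R[i],
       root (P c d n) x <->
       exists2 v : 'cV[R[i]]_n, v != 0 & Amx c d n *m v = x *: (Bmx d n *m v)).
Proof.
move=> hd n hn; case: n hn => [|n] // hn.
split.
  move=> x hx; apply/matrixP => k j; rewrite (ord1 j).
  rewrite /uvec (@rowE R c d n.+1 x (fun l => u c d l x) k) (@Eu R c d hd) // addr0.
  set BU := (Bmx d n.+1 *m _).
  rewrite !mxE.
  case: (ltnP k.+1 n.+1) => hk.
    by rewrite /= ltn_eqF // subr0 mulr0 addr0.
  have ek : (k : nat) = n by apply/eqP; rewrite eqn_leq -ltnS ltn_ord -ltnS hk.
  rewrite /= ek eqxx; ring.
move=> x; split.
  move=> hroot; have [ex|hx] := eqVneq x (iC R).
    by move: hroot; rewrite ex /root (negbTE (@Pi_neq0 R c d n.+1)).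
  exists (uvec c d n.+1 x).
    apply/eqP => /matrixP /(_ ord0 ord0); rewrite !mxE u0 => /eqP.
    by rewrite oner_eq0.
  apply/matrixP => k j; rewrite (ord1 j) /uvec (@rowE R c d n.+1 x (fun l => u c d l x) k) (@Eu R c d hd) // addr0.
  set BU := (Bmx d n.+1 *m _).
  rewrite [RHS]mxE.
  case: (ltnP k.+1 n.+1) => hk; first by rewrite subr0.
  have ek : (k : nat) = n by apply/eqP; rewrite eqn_leq -ltnS ltn_ord -ltnS hk.
  by rewrite ek uE (eqP hroot) !mulr0 subr0.
case=> v vnz hv.
set w := fun l => if (l < n.+1)%N then v (inord l) 0 else 0.
have vw : v = \col_(l < n.+1) w l.
  by apply/matrixP => k j; rewrite (ord1 j) mxE /w ltn_ord inord_val.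
have wn : w n.+1 = 0 by rewrite /w ltnn.
have Ew : forall k, (k < n.+1)%N -> @E R c d x w k = 0.
  move=> k hk; have := congr1 (fun M : 'cV[R[i]]_n.+1 => M (Ordinal hk) 0) hv.
  rewrite /= vw (@rowE R c d n.+1 x w (Ordinal hk)).
  set BU := (Bmx d n.+1 *m _).
  rewrite [RHS]mxE /=.
  have -> : (if (k.+1 < n.+1)%N then 0 else (iC R - x) * sqd d k.+2 * w k.+1) = 0.
    case: (ltnP k.+1 n.+1) => hk' //.
    have ek : k = n by apply/eqP; rewrite eqn_leq -ltnS hk -ltnS hk'.
    by rewrite ek wn mulr0.
  rewrite subr0 => h; apply: (addrI (x * BU (Ordinal hk) 0)).
  by rewrite addr0.
have vz : (forall k, (k < n.+1)%N -> w k = 0) -> False.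
  move=> h; move/eqP: vnz; apply; rewrite vw; apply/matrixP => k j.
  by rewrite !mxE h.
have [ex|hx] := eqVneq x (iC R).
  exfalso; apply: vz; elim=> [|k IH] hk.
    move: (Ew 0%N isT); rewrite /E ex subrr !mul0r addr0 subr0 => /eqP.
    by rewrite mulf_eq0 (negbTE (subC_iC _ _)) => /eqP.
  move: (Ew k.+1 hk); rewrite /E ex subrr !mul0r addr0 IH ?(ltnW hk) // mulr0 subr0.
  by move/eqP; rewrite mulf_eq0 (negbTE (subC_iC _ _)) => /eqP.
have Q : forall k, (k < n.+1)%N -> w k = w 0%N * u c d k x /\ w k.+1 = w 0%N * u c d k.+1 x.
  elim=> [|k IH] hk.
    have q0 : w 0%N = w 0%N * u c d 0 x by rewrite u0 mulr1.
    by split=> //; apply: (@Estep R c d hd x _ _ _ _ hx (Ew 0%N hk) (@Eu R c d hd x 0 hx) q0).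
  have [q1 q2] := IH (ltnW hk).
  by split=> //; apply: (@Estep R c d hd x _ _ _ _ hx (Ew k.+1 hk) (@Eu R c d hd x k.+1 hx) q2).
have [w00|w0n0] := eqVneq (w 0%N) 0.
  exfalso; apply: vz => k hk; have [-> _] := Q k hk; by rewrite w00 mul0r.
have := (Q n (ltnSn n)).2; rewrite wn uE => /esym/eqP.
rewrite mulf_eq0 (negbTE w0n0) /= mulf_eq0 (negbTE (@a_neq0 R d hd x _ hx)) /= => /eqP h.
by rewrite /root h.
Qed.
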